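(* Let $b\ge3$, $1\le j\le b-1$, $\ell\in\{2,\dots,b\}$. For $i=1,\dots,\ell$ let $I_i=[a_i,b_i]\subseteq[0,1]$ be nonempty intervals, fix numbers $\bar p_{\ell+1},\dots,\bar p_b$, and fix a probability vector $\bar q\in\mathbb R^b$ with $\bar q_1=\bar q_2=\dots=\bar q_\ell$. Let $D$ be the set of pairs $(p,\bar q)$ where $p$ is a probability vector in $\mathbb R^b$ with $p_i\in I_i$ for $i\le\ell$ and $p_i=\bar p_i$ for $i>\ell$. If $(\bar p;\bar q)\in D$ is a maximum point of $\Psi_j$ on $D$, then either $\bar p_1=\bar p_2=\dots=\bar p_\ell$, or the maximum of $\Psi_j$ on $D$ is also attained at some point $(p';\bar q)\in D$ with $p'_i\in\{a_i,b_i\}$ for some $i\in\{1,\dots,\ell\}$.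
   Context: For an integer $1\le j\le b-1$ and vectors $p,q\in\mathbb R^b$, $$\Psi_j(p;q)=\frac{1}{(b-j-1)!}\sum_{\sigma\in S_b}\Big(p_{\sigma(1)}\cdots p_{\sigma(j)}\,q_{\sigma(j+1)}+q_{\sigma(1)}\cdots q_{\sigma(j)}\,p_{\sigma(j+1)}\Big),$$ where $S_b$ is the set of permutations of $\{1,\dots,b\}$. *)

(* Defs.v *)
From HB Require Import structures.
From mathcomp Require Import all_boot all_order all_algebra all_fingroup.
Set Implicit Arguments. Unset Strict Implicit. Unset Printing Implicit Defensive.
Import Order.TTheory GRing.Theory Num.Theory.
Local Open Scope ring_scope.

(* Indices 1..b of the paper are 0..b-1 here (the ordinals 'I_b).
   Psi_j(p;q) = 1/(b-j-1)! * sum_{sigma in S_b}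
      ( p_{s(1)}..p_{s(j)} q_{s(j+1)} + q_{s(1)}..q_{s(j)} p_{s(j+1)} ),
   where s(1..j) become sigma(0..j-1) and s(j+1) becomes sigma(j). The
   single factor at index j is written as a (one-term) sum over i with i = j. *)
Definition Psi (R : fieldType) (b j : nat) (p q : 'I_b -> R) : R :=
  ((b - j - 1)`!)%:R^-1 *
  \sum_(s : 'S_b)
     ( (\prod_(i : 'I_b | (i < j)%N) p (s i)) * (\sum_(i : 'I_b | (i == j :> nat)) q (s i))
     + (\prod_(i : 'I_b | (i < j)%N) q (s i)) * (\sum_(i : 'I_b | (i == j :> nat)) p (s i))).

Definition prob_vec (R : numDomainType) (b : nat) (p : 'I_b -> R) : Prop :=
  (forall i, 0 <= p i) /\ \sum_(i < b) p i = 1.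

Definition inD (R : numDomainType) (b l : nat) (a c pbar p : 'I_b -> R) : Prop :=
  prob_vec p /\
  (forall i : 'I_b, (i < l)%N -> a i <= p i <= c i) /\
  (forall i : 'I_b, (l <= i)%N -> p i = pbar i).

(* Main.v *)
Require Import Defs.
From HB Require Import structures.
From mathcomp Require Import all_boot all_order all_algebra all_fingroup.
From mathcomp Require Import ring lra.
From Stdlib Require Import FunctionalExtensionality.
Import Order.TTheory GRing.Theory Num.Theory.
Set Implicit Arguments. Unset Strict Implicit. Unset Printing Implicit Defensive.
Local Open Scope ring_scope.

Section Aff.
Variable R : realFieldType.
Definition aff (f : R -> R) := forall u, f u = f 0 + u * (f 1 - f 0).

Lemma aff_const c : aff (fun _ => c).
Proof. by move=> u; rewrite subrr mulr0 addr0. Qed.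
Lemma aff_id : aff (fun u => u).
Proof. by move=> u; rewrite subr0 mulr1 add0r. Qed.
Lemma aff_add f g : aff f -> aff g -> aff (fun u => f u + g u).
Proof. move=> hf hg u; rewrite hf hg; ring. Qed.
Lemma aff_mulr c f : aff f -> aff (fun u => c * f u).
Proof. move=> hf u; rewrite hf; ring. Qed.
Lemma aff_mull c f : aff f -> aff (fun u => f u * c).
Proof. move=> hf u; rewrite hf; ring. Qed.
Lemma aff_sum (I : finType) (P : pred I) (F : I -> R -> R) :
  (forall x, aff (F x)) -> aff (fun u => \sum_(x | P x) F x u).
Proof.
move=> hF u.
rewrite (eq_bigr (fun x => F x 0 + u * (F x 1 - F x 0))); last by move=> x _; apply: hF.
by rewrite big_split /= -mulr_sumr sumrB.
Qed.

Definition upd (b : nat) (p : 'I_b -> R) (i : 'I_b) (u : R) : 'I_b -> R :=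
  fun m => if m == i then u else p m.

Lemma aff_upd b (p : 'I_b -> R) i m : aff (fun u => upd p i u m).
Proof. rewrite /upd; case: (m == i); [exact: aff_id | exact: aff_const]. Qed.

Lemma aff_prod b (p : 'I_b -> R) i (s : 'S_b) (P : pred 'I_b) :
  aff (fun u => \prod_(m | P m) upd p i u (s m)).
Proof.
case Hm: (P (s^-1 i)%g).
  have E : forall u, \prod_(m | P m) upd p i u (s m) =
       u * \prod_(m | P m && (m != (s^-1 i)%g)) p (s m).
    move=> u; rewrite (bigD1 _ Hm) /= {1}/upd permKV eqxx; congr (_ * _).
    apply: eq_bigr => m /andP[_ hm]; rewrite /upd.
    case: eqP => // e; case/negP: hm; by rewrite -e permK.
  move=> u; rewrite !E; ring.
have E : forall u, \prod_(m | P m) upd p i u (s m) = \prod_(m | P m) p (s m).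
  move=> u; apply: eq_bigr => m hm; rewrite /upd; case: eqP => // e.
  by move: Hm; rewrite -e permK hm.
by move=> u; rewrite !E; ring.
Qed.

Lemma aff_Psi b j (p q : 'I_b -> R) i : aff (fun u => Psi j (upd p i u) q).
Proof.
rewrite /Psi; apply: aff_mulr; apply: aff_sum => s.
apply: aff_add; first by apply: aff_mull; apply: aff_prod.
by apply: aff_mulr; apply: aff_sum => m; apply: aff_upd.
Qed.
End Aff.
Lemma bnd (R : realFieldType) (lo v hi h : R) : lo < v -> v < hi -> 0 < h ->
  h <= hi - v -> h <= v - lo ->
  [/\ lo <= v + h <= hi, lo <= v - h <= hi, lo <= v + - h <= hi & lo <= v - - h <= hi].
Proof. move=> *; split; apply/andP; split; lra. Qed.

Lemma hexists (R : realFieldType) (u1 u2 u3 u4 d : R) :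
  0 < u1 -> 0 < u2 -> 0 < u3 -> 0 < u4 -> d != 0 ->
  exists h, 0 < h /\ h <= u1 /\ h <= u2 /\ h <= u3 /\ h <= u4 /\ 2 * h <= `|d|.
Proof.
move=> p1 p2 p3 p4 dn.
have pd : 0 < `|d| / 2 by rewrite divr_gt0 // normr_gt0.
exists (Num.min (Num.min (Num.min u1 u2) (Num.min u3 u4)) (`|d| / 2)).
rewrite !lt_min p1 p2 p3 p4 pd; split => //.
have := ge_min (`|d| / 2) (Num.min (Num.min u1 u2) (Num.min u3 u4)) (`|d| / 2).
rewrite lexx orbT => hm.
rewrite !ge_min !lexx ?orbT /=; repeat split => //; lra.
Qed.

Lemma keyD (R : realFieldType) (D d h : R) : 0 < h -> 2 * h <= `|d| -> d != 0 ->
  D * h * (d - h) <= 0 -> D * (- h) * (d - - h) <= 0 -> D = 0.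
Proof.
move=> h0 hd dn f1 f2.
have e1 : D * h * (d - h) = D * (h * (d - h)) by ring.
have e2 : D * (- h) * (d - - h) = - (D * (h * (d + h))) by ring.
rewrite e1 in f1; rewrite e2 oppr_le0 in f2.
case: (ltgtP d 0) => [dn'|dp|de]; last by move: dn; rewrite de eqxx.
  rewrite ltr0_norm // in hd.
  have p1 : h * (d - h) < 0 by rewrite pmulr_rlt0 //; lra.
  have p2 : h * (d + h) < 0 by rewrite pmulr_rlt0 //; lra.
  apply/eqP; rewrite eq_le; apply/andP; split.
    by rewrite -(nmulr_lge0 _ p2).
  by rewrite -(nmulr_lle0 _ p1).
rewrite gtr0_norm // in hd.
have p1 : 0 < h * (d - h) by rewrite pmulr_rgt0 //; lra.
have p2 : 0 < h * (d + h) by rewrite pmulr_rgt0 //; lra.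
apply/eqP; rewrite eq_le; apply/andP; split.
  by rewrite -(pmulr_lle0 _ p1).
by rewrite -(pmulr_lge0 _ p2).
Qed.


Lemma Psi_perm (R : realFieldType) b j (t : 'S_b) (p q : 'I_b -> R) :
  Psi j (fun m => p (t m)) (fun m => q (t m)) = Psi j p q.
Proof.
rewrite /Psi; congr (_ * _); symmetry.
rewrite (reindex_inj (mulIg t)); apply: eq_bigr => s _.
congr (_ * _ + _ * _); apply: eq_bigr => m _; by rewrite permM.
Qed.

Lemma swap_upd (R : realFieldType) b (p : 'I_b -> R) i k u w :
  i != k -> upd (upd p i u) k w = upd (upd p k w) i u.
Proof.
move=> ik; apply: functional_extensionality => m; rewrite /upd.
case: (eqVneq m k) => [->|mk]; first by rewrite eq_sym (negbTE ik).
by case: (eqVneq m i).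
Qed.

Theorem mainTheorem6 (R : realFieldType) (b j l : nat)
  (a c pbar qbar : 'I_b -> R) :
  (3 <= b)%N -> (1 <= j)%N -> (j <= b - 1)%N -> (2 <= l)%N -> (l <= b)%N ->
  (forall i : 'I_b, (i < l)%N -> 0 <= a i /\ a i <= c i /\ c i <= 1) ->
  prob_vec qbar ->
  (forall i k : 'I_b, (i < l)%N -> (k < l)%N -> qbar i = qbar k) ->
  inD l a c pbar pbar ->
  (forall p, inD l a c pbar p -> Psi j p qbar <= Psi j pbar qbar) ->
  (forall i k : 'I_b, (i < l)%N -> (k < l)%N -> pbar i = pbar k) \/
  (exists p' : 'I_b -> R,
     inD l a c pbar p' /\ Psi j p' qbar = Psi j pbar qbar /\
     exists i : 'I_b, (i < l)%N /\ (p' i = a i \/ p' i = c i)).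
Proof.
move=> hb hj hjb hl hlb hac hq hqeq hD hmax.
case: (boolP [exists m : 'I_b, (m < l)%N && ((pbar m == a m) || (pbar m == c m))]).
  case/existsP => m /andP[ml /orP[/eqP e|/eqP e]]; right; exists pbar;
    (split; [done | split; [done | exists m; by auto]]).
move=> hint.
have hD' := hD; case: hD' => [[hpos hsum] [hI hO]].
have hint' : forall m : 'I_b, (m < l)%N -> a m < pbar m < c m.
  move=> m ml; have /andP[h1 h2] := hI m ml.
  rewrite !lt_neqAle h1 h2 !andbT; apply/andP; split; apply/negP => /eqP e;
    move/negP: hint; apply; apply/existsP; exists m; rewrite ml e eqxx ?orbT //.
case: (boolP [forall m : 'I_b, forall k : 'I_b,
                ((m < l)%N && (k < l)%N) ==> (pbar m == pbar k)]).
  move=> /forallP H; left => m k ml kl; have /forallP H2 := H m.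
  by move/implyP: (H2 k); rewrite ml kl => /(_ isT) /eqP.
move=> /forallPn [i /forallPn [k]]; rewrite negb_imply => /andP[/andP[il kl] ne].
right.
set x := pbar i; set y := pbar k.
have ik : i != k by apply: contraNneq ne => ->.
pose G u w := Psi j (upd (upd pbar i u) k w) qbar.
have Gu : forall u w, G u w = G 0 w + u * (G 1 w - G 0 w).
  by move=> u w; rewrite /G !(swap_upd _ _ _ ik); exact: aff_Psi.
have Gw : forall u w, G u w = G u 0 + w * (G u 1 - G u 0).
  by move=> u w; exact: aff_Psi.
have Gf : forall u w, G u w = G 0 0 + u * (G 1 0 - G 0 0)
   + w * (G 0 1 + u * (G 1 1 - G 0 1) - G 0 0 - u * (G 1 0 - G 0 0)).
  move=> u w; rewrite Gw (Gu u 0) (Gu u 1); ring.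
have sym : G 1 0 = G 0 1.
  rewrite /G -(Psi_perm j (tperm i k) (upd (upd pbar i 0) k 1) qbar).
  congr Psi; apply: functional_extensionality => m; rewrite /upd.
    case: (eqVneq m i) => [->|mi]; first by rewrite tpermL eqxx (negbTE ik).
    case: (eqVneq m k) => [->|mk]; first by rewrite tpermR (negbTE ik) !eqxx.
    have im : i != m by rewrite eq_sym.
    have km : k != m by rewrite eq_sym.
    by rewrite tpermD // (negbTE mi) (negbTE mk).
  case: (eqVneq m i) => [->|mi]; first by rewrite tpermL; apply: hqeq.
  case: (eqVneq m k) => [->|mk]; first by rewrite tpermR; apply: hqeq.
  have im : i != m by rewrite eq_sym.
  have km : k != m by rewrite eq_sym.
  by rewrite tpermD.
have Gp : G x y = Psi j pbar qbar.
  rewrite /G; congr Psi; apply: functional_extensionality => m; rewrite /upd.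
  case: (eqVneq m k) => [->|mk] //; case: (eqVneq m i) => [->|mi] //.
pose Dc := G 1 1 - G 1 0 - G 0 1 + G 0 0.
have val : forall t, G (x + t) (y - t) = G x y + Dc * t * (y - x - t).
  move=> t; rewrite (Gf (x + t)) (Gf x y) /Dc sym; ring.
have feas : forall t, a i <= x + t <= c i -> a k <= y - t <= c k ->
    inD l a c pbar (upd (upd pbar i (x + t)) k (y - t)).
  move=> t /andP[t1 t2] /andP[t3 t4].
  have hai := hac i il; have hak := hac k kl.
  have E : forall m, upd (upd pbar i (x + t)) k (y - t) m =
      pbar m + ((m == i)%:R * t - (m == k)%:R * t).
    move=> m; rewrite /upd.
    case: (eqVneq m k) => [->|mk]; first by rewrite ?eqxx (eq_sym k i) (negbTE ik) /= /y; ring.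
    case: (eqVneq m i) => [->|mi]; first by rewrite ?eqxx /= /x; ring.
    rewrite ?(negbTE mi) /=; ring.
  split; [split|split].
  - move=> m; rewrite /upd.
    case: (eqVneq m k) => [_|mk]; first by lra.
    case: (eqVneq m i) => [_|mi]; first by lra.
    exact: hpos.
  - rewrite (eq_bigr _ (fun m _ => E m)) big_split /= hsum sumrB.
    have S1 : forall z : 'I_b, \sum_(m < b) ((m == z)%:R : R) = 1.
      move=> z; rewrite (bigD1 z) //= eqxx big1 ?addr0 // => m /negbTE ->; exact: mulr0n.
    rewrite -!mulr_suml !S1; ring.
  - move=> m ml; rewrite /upd.
    case: (eqVneq m k) => [->|mk]; first by rewrite t3 t4.
    case: (eqVneq m i) => [->|mi]; first by rewrite t1 t2.
    exact: hI.
  - move=> m lm; rewrite /upd.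
    case: (eqVneq m k) => [e|mk]; first by move: kl; rewrite -e ltnNge lm.
    case: (eqVneq m i) => [e|mi]; first by move: il; rewrite -e ltnNge lm.
    by [].
have fle : forall t, a i <= x + t <= c i -> a k <= y - t <= c k ->
    Dc * t * (y - x - t) <= 0.
  move=> t h1 h2; have := hmax _ (feas t h1 h2).
  rewrite -/(G _ _) val -Gp; lra.
have hxi := hint' i il; have hyk := hint' k kl.
have dne : y - x != 0 by rewrite subr_eq0 eq_sym.
have Dc0 : Dc = 0.
  move: (hxi) (hyk) => /andP[q1 q2] /andP[q3 q4].
  have e1 : 0 < c i - x by rewrite subr_gt0.
  have e2 : 0 < y - a k by rewrite subr_gt0.
  have e3 : 0 < x - a i by rewrite subr_gt0.
  have e4 : 0 < c k - y by rewrite subr_gt0.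
  have [h [hpos' [h1 [h2 [h3 [h4 h5']]]]]] :=
    hexists (e1 : 0 < c i - x) (e2 : 0 < y - a k) (e3 : 0 < x - a i) (e4 : 0 < c k - y) dne.
  have [bx1 bx2 bx3 bx4] := bnd q1 q2 hpos' h1 h3.
  have [by1 by2 by3 by4] := bnd q3 q4 hpos' h4 h2.
  have f1 : Dc * h * (y - x - h) <= 0 by apply: fle.
  have f2 : Dc * (- h) * (y - x - - h) <= 0 by apply: fle.
  exact: (keyD hpos' h5' dne f1 f2).
have Gc : forall t, G (x + t) (y - t) = G x y by move=> t; rewrite val Dc0; ring.
move: hxi hyk; rewrite -/x -/y => /andP[q1 q2] /andP[q3 q4].
case: (lerP (c i - x) (y - a k)) => hle.
  exists (upd (upd pbar i (x + (c i - x))) k (y - (c i - x))).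
  split; first by apply: feas; apply/andP; split; lra.
  split; first by rewrite -/(G _ _) Gc Gp.
  exists i; split => //; right; rewrite /upd (negbTE ik) eqxx; ring.
exists (upd (upd pbar i (x + (y - a k))) k (y - (y - a k))).
split; first by apply: feas; apply/andP; split; lra.
split; first by rewrite -/(G _ _) Gc Gp.
exists k; split => //; left; rewrite /upd eqxx; ring.
Qed.
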